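(* Let $K$ be an admissible kernel on $X\times Y$. Then the invariant measure $m_Y$ satisfies $$\inf_{\mu\in\mathcal{M}(Y)}\sup_{x\in X}U_K^\mu(x)=\sup_{x\in X}U_K^{m_Y}(x),$$ i.e. $m_Y$ minimizes $\mu\mapsto\sup_{x\in X}\int_Y K(x,y)\,d\mu(y)$ over $\mathcal{M}(Y)$.
   Context: $(X,d_X)$ and $(Y,d_Y)$ are compact metric spaces and $G$ is a compact topological group acting isometrically and transitively on both $X$ and $Y$. $\mathcal{M}(Y)$ is the set of Borel probability measures on $Y$; $m_X$ and $m_Y$ denote the unique $G$-invariant Radon (Borel) probability measures on $X$ and $Y$. A Borel measurable $K:X\times Y\to\mathbb{R}\cup\{-\infty\}$ is an admissible kernel if: (i) there is $B_K\in[0,\infty)$ with $-\infty\le K(x,y)\le B_K$ for all $x,y$; (ii) $\int_X|K(x,y)|\,dm_X(x)<\infty$ for every $y\in Y$; (iii) for every $y$, $K(\cdot,y)$ is upper semi-continuous; (iv) $K(g(x),y)=K(x,g^{-1}(y))$ for all $g\in G,x\in X,y\in Y$. For $\mu\in\mathcal{M}(Y)$, $U_K^\mu(x)=\int_Y K(x,y)\,d\mu(y)$. *)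

(* Defs.v *)
From HB Require Import structures.
From mathcomp Require Import all_boot all_order all_algebra.
From mathcomp Require Import all_classical all_reals all_analysis measurable_realfun.
Set Implicit Arguments. Unset Strict Implicit. Unset Printing Implicit Defensive.
Import Order.TTheory GRing.Theory Num.Theory.
Local Open Scope classical_set_scope.
Local Open Scope ring_scope.

Definition is_metric (R : realType) (T : Type) (dist : T -> T -> R) : Prop :=
  (forall x y, 0 <= dist x y) /\
  (forall x y, dist x y = 0 <-> x = y) /\
  (forall x y, dist x y = dist y x) /\
  (forall x y z, dist x z <= dist x y + dist y z).

Definition dopen (R : realType) (T : Type) (dist : T -> T -> R) (A : set T) : Prop :=
  forall x, A x -> exists2 e : R, 0 < e & forall z, dist x z < e -> A z.

Definition dcompact (R : realType) (T : Type) (dist : T -> T -> R) : Prop :=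
  forall F : set (set T), (forall A, F A -> dopen dist A) ->
    [set: T] `<=` \bigcup_(A in F) A ->
    exists s : seq (set T), (forall A, A \in s -> F A) /\
      [set: T] `<=` \bigcup_(A in [set A | A \in s]) A.

Definition compact_metric_borel (R : realType) (d : measure_display)
  (T : measurableType d) (dist : T -> T -> R) : Prop :=
  [/\ is_metric dist, dcompact dist &
      (@measurable d T) = <<s [set A | dopen dist A] >>].

Definition compact_topological_group (G : topologicalType)
  (mul : G -> G -> G) (inv : G -> G) (one : G) : Prop :=
  [/\ (forall a b c, mul a (mul b c) = mul (mul a b) c),
      (forall a, mul one a = a /\ mul a one = a),
      (forall a, mul (inv a) a = one /\ mul a (inv a) = one),
      (continuous (fun p : G * G => mul p.1 p.2) /\ continuous inv) &
      compact [set: G]].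

Definition isometric_transitive_action (R : realType) (G : topologicalType)
  (mul : G -> G -> G) (one : G) (T : Type) (dist : T -> T -> R)
  (act : G -> T -> T) : Prop :=
  [/\ (forall x, act one x = x),
      (forall g h x, act (mul g h) x = act g (act h x)),
      (forall x, forall g0 : G, forall e : R, 0 < e ->
          \forall g \near g0, dist (act g x) (act g0 x) < e),
      (forall g x y, dist (act g x) (act g y) = dist x y) &
      (forall x y, exists g, act g x = y)].

Definition invariant_measure (R : realType) (d : measure_display)
  (T : measurableType d) (G : Type) (act : G -> T -> T)
  (m : probability T R) : Prop :=
  forall g A, measurable A -> m (act g @^-1` A) = m A.

Definition usc (R : realType) (T : Type) (dist : T -> T -> R)
  (f : T -> \bar R) : Prop :=
  forall x0 (t : R), (f x0 < t%:E)%E ->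
    exists2 delta : R, 0 < delta & forall x, dist x x0 < delta -> (f x < t%:E)%E.

Definition admissible_kernel (R : realType) (dX dY : measure_display)
  (X : measurableType dX) (Y : measurableType dY)
  (distX : X -> X -> R) (G : Type) (inv : G -> G)
  (actX : G -> X -> X) (actY : G -> Y -> Y) (mX : probability X R)
  (K : X -> Y -> \bar R) : Prop :=
  [/\ measurable_fun [set: X * Y] (fun p : X * Y => K p.1 p.2),
      (exists2 B : R, 0 <= B & forall x y, (K x y <= B%:E)%E),
      (forall y, (\int[mX]_x `|K x y| < +oo)%E),
      (forall y, usc distX (fun x => K x y)) &
      (forall g x y, K (actX g x) y = K x (actY (inv g) y))].

Definition potential (R : realType) (dY : measure_display)
  (X : Type) (Y : measurableType dY) (K : X -> Y -> \bar R)
  (mu : probability Y R) (x : X) : \bar R :=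
  (\int[mu]_y K x y)%E.

(* Main.v *)
Require Import Defs.
From HB Require Import structures.
From mathcomp Require Import all_boot all_order all_algebra.
From mathcomp Require Import all_classical all_reals all_analysis measurable_realfun.
From mathcomp Require Import lra.
Import Order.TTheory GRing.Theory Num.Theory.
Local Open Scope classical_set_scope.
Local Open Scope ring_scope.

Section Aux.
Local Open Scope ereal_scope.

Lemma int_cst_prob {R : realType} {d} {T : measurableType d} (P : probability T R)
  (r : \bar R) : \int[P]_x (cst r) x = r.
Proof.
rewrite (integral_cst P measurableT r).
by rewrite [X in (_ * X)%E](_ : _ = 1%E) ?mule1 //; exact: probability_setT.
Qed.

Lemma int_cstB {R : realType} {d} {T : measurableType d} (P : probability T R)
  (B : R) (f : T -> \bar R) : measurable_fun setT f -> (forall x, 0 <= f x) ->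
  \int[P]_x (B%:E - f x) = B%:E - \int[P]_x f x.
Proof.
move=> mf f0.
have iB : P.-integrable setT (EFin \o cst B) :=
  finite_measure_integrable_cst P B measurableT.
have [fin|] := ltP (\int[P]_x f x) +oo.
  have If : P.-integrable setT f.
    apply/integrableP; split => //.
    by under eq_integral do rewrite gee0_abs//.
  transitivity (\int[P]_x ((EFin \o cst B) \- f) x); first by [].
  by rewrite integralB// (int_cst_prob P B%:E).
rewrite leye_eq => /eqP Hinf; rewrite Hinf.
rewrite addeNy.
set h := fun x => B%:E - f x.
have mh : measurable_fun setT h.
  by apply: emeasurable_funB => //.
rewrite integralE.
have hn : \int[P]_x h^\- x = +oo.
  have : \int[P]_x f x <= \int[P]_x (h^\- x + (Num.max B 0%R)%:E).
    apply: ge0_le_integral => //.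
    - apply: emeasurable_funD => //; exact: measurable_funeneg.
    - move=> x _; rewrite funenegE /h.
      case: (f x) (f0 x) => [r r0| _|//].
        rewrite -EFinB -EFinN -EFin_max -EFinD lee_fin.
        apply: (@le_trans _ _ (- (B - r) + B)%R); first by rewrite opprB subrK.
        by apply: lerD; rewrite le_max lexx.
      by [].
  rewrite ge0_integralD //; last 2 first.
    - exact: measurable_funeneg.
    - by move=> x _; rewrite lee_fin le_max lexx orbT.
  rewrite int_cst_prob Hinf.
  by case: (\int[P]_x h^\- x) => [a||] //=; rewrite leye_eq.
by rewrite hn addeNy.
Qed.

Lemma meas_iso {R : realType} {d} {T : measurableType d} (dist : T -> T -> R)
  (phi : T -> T) : (@measurable d T) = <<s [set A | dopen dist A] >> ->
  (forall x y, dist (phi x) (phi y) = dist x y) -> measurable_fun setT phi.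
Proof.
move=> hm iso; apply: (@measurability _ _ _ _ setT phi _ hm).
move=> _ [A oA <-]; rewrite setTI hm; apply: sub_sigma_algebra.
move=> x /= Ax; have [e e0 He] := oA _ Ax.
by exists e => // z; rewrite -(iso x z) => /He.
Qed.

Lemma int_inv {R : realType} {d} {T : measurableType d} (P : probability T R)
  (phi : T -> T) (f : T -> \bar R) :
  (forall A, measurable A -> P (phi @^-1` A) = P A) ->
  measurable_fun setT phi -> measurable_fun setT f -> (forall x, 0 <= f x) ->
  \int[P]_y f (phi y) = \int[P]_y f y.
Proof.
move=> inv mphi mf f0.
transitivity (\int[P]_(x in phi @^-1` setT) (f \o phi) x); first by rewrite preimage_setT.
rewrite -(ge0_integral_pushforward mphi P measurableT) //.
apply: (eq_measure_integral P) => A mA _.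
by rewrite /pushforward; apply: inv.
Qed.
End Aux.

Theorem corollary4p8 (R : realType) (dX dY : measure_display)
  (X : measurableType dX) (Y : measurableType dY)
  (distX : X -> X -> R) (distY : Y -> Y -> R)
  (G : topologicalType) (mul : G -> G -> G) (inv : G -> G) (one : G)
  (actX : G -> X -> X) (actY : G -> Y -> Y)
  (mX : probability X R) (mY : probability Y R)
  (K : X -> Y -> \bar R) :
  compact_metric_borel distX ->
  compact_metric_borel distY ->
  compact_topological_group mul inv one ->
  isometric_transitive_action mul one distX actX ->
  isometric_transitive_action mul one distY actY ->
  invariant_measure actX mX ->
  invariant_measure actY mY ->
  admissible_kernel distX inv actX actY mX K ->
  ereal_inf [set ereal_sup (range (potential K mu)) | mu in [set: probability Y R]]
  = ereal_sup (range (potential K mY)).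
Proof.
move=> [_ _ hmX] [_ _ hmY] [assoc unit invax _ _] [_ _ _ isoX trX]
  [_ _ _ isoY trY] invX invY [mK [B B0 KB] _ _ Kinv].
have [x0 _] : exists x : X, True.
  apply: contrapT => nX.
  have h1 := probability_setT mX.
  have e : [set: X] = set0.
    by apply/seteqP; split => // x _; apply: nX; exists x.
  rewrite e measure0 in h1; move: h1 => [] /eqP; by rewrite eq_sym oner_eq0.
have [y0 _] : exists y : Y, True.
  apply: contrapT => nY.
  have h1 := probability_setT mY.
  have e : [set: Y] = set0.
    by apply/seteqP; split => // x _; apply: nY; exists x.
  rewrite e measure0 in h1; move: h1 => [] /eqP; by rewrite eq_sym oner_eq0.
have invinv : forall a, inv (inv a) = a.
  move=> a; transitivity (mul (inv (inv a)) one); first by rewrite (unit _).2.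
  by rewrite -(invax a).1 assoc (invax (inv a)).1 (unit a).1.
pose F := fun (x : X) (y : Y) => (B%:E - K x y)%E.
have F0 : forall x y, (0 <= F x y)%E.
  by move=> x y; rewrite /F sube_ge0 ?KB// orbT.
have KF : forall x y, K x y = (B%:E - F x y)%E.
  move=> x y; rewrite /F; have := KB x y.
  case: (K x y) => [r||] _ //=.
  by rewrite -EFinD opprB addrC subrK.
have mF : measurable_fun setT (fun p : X * Y => F p.1 p.2).
  by apply: emeasurable_funB => //.
have mFx : forall x, measurable_fun setT (F x).
  move=> x; exact: (measurableT_comp mF (pair1_measurable x)).
have mFy : forall y, measurable_fun setT (F^~ y).
  move=> y; exact: (measurableT_comp mF (pair2_measurable y)).
have mactX : forall g, measurable_fun setT (actX g).
  by move=> g; exact: (meas_iso _ _ hmX (isoX g)).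
have mactY : forall g, measurable_fun setT (actY g).
  by move=> g; exact: (meas_iso _ _ hmY (isoY g)).
pose V := fun (mu : probability Y R) x => (\int[mu]_y F x y)%E.
pose W := fun y => (\int[mX]_x F x y)%E.
have hU : forall mu x, potential K mu x = (B%:E - V mu x)%E.
  move=> mu x; rewrite /potential /V.
  under eq_integral => y _ do rewrite KF.
  exact: int_cstB (mFx x) (F0 x).
have Wc : forall y, W y = W y0.
  move=> y; have [g <-] := trY y0 y.
  have e : forall x, F x (actY g y0) = F (actX (inv g) x) y0.
    by move=> x; rewrite /F Kinv invinv.
  rewrite /W; under eq_integral => x _ do rewrite e.
  apply: (int_inv mX (actX (inv g)) (F^~ y0)) => //.
  exact: invX.

pose w := W y0.
have TV : forall mu : probability Y R, (\int[mX]_x V mu x)%E = w.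
  move=> mu.
  have := fubini_tonelli (m1:=mX) (m2:=mu) _ mF (fun p => F0 p.1 p.2).
  rewrite /= /V => ->.
  under eq_integral => y _ do rewrite -/(W y) Wc.
  exact: int_cst_prob.
have Vc : forall x, V mY x = V mY x0.
  move=> x; have [g <-] := trX x0 x.
  have e : forall y, F (actX g x0) y = F x0 (actY (inv g) y).
    by move=> y; rewrite /F Kinv.
  rewrite /V; under eq_integral => y _ do rewrite e.
  apply: (int_inv mY (actY (inv g)) (F x0)) => //.
  exact: invY.
have VmY : forall x, V mY x = w.
  move=> x; rewrite Vc -(TV mY).
  under [RHS]eq_integral => z _ do rewrite Vc.
  by rewrite int_cst_prob.
have hUmY : forall x, potential K mY x = (B%:E - w)%E.
  by move=> x; rewrite hU VmY.

have V0 : forall mu x, (0 <= V mu x)%E.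
  by move=> mu x; apply: integral_ge0 => y _; exact: F0.
have mV : forall mu : probability Y R, measurable_fun setT (V mu).
  move=> mu; exact: (measurable_fun_fubini_tonelli_F (m2:=mu) _ mF (fun p => F0 p.1 p.2)).
have lower : forall mu : probability Y R,
    (B%:E - w <= ereal_sup (range (potential K mu)))%E.
  move=> mu.
  have ub : forall x, (potential K mu x <= ereal_sup (range (potential K mu)))%E.
    by move=> x; apply: ereal_sup_ubound; exists x.
  move: (ereal_sup _) ub => s ub.
  case: s ub => [r||] ub; last 2 first.
  - exact: leey.
  - have Vy : forall x, V mu x = +oo%E.
      move=> x; have := ub x; rewrite hU.
      have := V0 mu x; case: (V mu x) => [v||] //=.
    have : w = +oo%E.
      rewrite -(TV mu); under eq_integral => x _ do rewrite Vy.
      exact: int_cst_prob.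
    by move=> ->.
  - have lb : forall x, ((Num.max (B - r) 0%R)%:E <= V mu x)%E.
      move=> x; have := ub x; rewrite hU.
      have := V0 mu x; case: (V mu x) => [v||] //=; last first.
        by move=> _ _; exact: leey.
      rewrite !lee_fin => v0 h.
      rewrite ge_max v0 andbT; lra.
    have : ((Num.max (B - r) 0%R)%:E <= w)%E.
      rewrite -(TV mu) -[leLHS](int_cst_prob mX).
      apply: ge0_le_integral => //.
      by move=> x _; rewrite lee_fin le_max lexx orbT.
    move: (w) => wv; case: wv => [v||] //=; last by rewrite addeNy leNye.
    rewrite lee_fin ge_max => /andP[h _].
    rewrite -EFinD lee_fin; lra.
apply/eqP; rewrite eq_le; apply/andP; split.
  by apply: ereal_inf_lbound; exists mY.
apply: le_ereal_inf_tmp => _ [mu _ <-].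
apply: le_trans (lower mu).
by apply: ge_ereal_sup => _ [x _ <-]; rewrite hUmY.
Qed.
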